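(* There are absolute constants $\gamma>0$ and $C_0\ge 1$ such that for every integer $k>5$ the following holds. For every (deterministic) terminal-cuts scheme for $k$-terminal networks whose edge costs are integers in $\{1,\dots,n^{C_0}\}$ (where $n$ is the number of vertices), there exists such a $k$-terminal network $(G,c)$ on which the memory $M=P(G,c)$ produced by preprocessing occupies at least $2^{\gamma k}$ machine words, where a machine word consists of $\lceil\log_2 n\rceil$ bits.
   Context: A $k$-terminal network $(G,c)$ is an undirected graph $G$ with edge costs $c$ and a set $Q\subseteq V(G)$ of $k$ terminals. For $S\subset Q$, $S\ne\emptyset,Q$, $\bar S=Q\setminus S$, and $\mathrm{mincut}_{G,c}(S,\bar S)$ is the minimum total cost of the set of edges crossing a cut $(W,V(G)\setminus W)$ with $W\cap Q\in\{S,\bar S\}$. A terminal-cuts (TC) scheme consists of a preprocessing map $P$ that maps each $k$-terminal network $(G,c)$ (with the stated edge costs) to a memory image $M$ (a bit string), and a query map $Q(\cdot\,;\cdot)$ that, given $S\subset Q$ and $M$ only (without access to $(G,c)$), outputs a value, such that $Q(S;P(G,c))=\mathrm{mincut}_{G,c}(S,\bar S)$ for all networks and all $S\subset Q$, $S\neq\emptyset,Q$. Storage is measured in machine words of $\Theta(\log n)$ bits. *)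

(* Defs.v *)
From mathcomp Require Import all_boot.
From Stdlib Require Import Reals.
Set Implicit Arguments. Unset Strict Implicit. Unset Printing Implicit Defensive.

(* A k-terminal network with m non-terminal vertices: vertex set 'I_(k+m)
   (so n = k + m vertices); terminal number i : 'I_k is vertex lshift m i.
   The undirected graph with edge costs is given by a symmetric cost function
   c with zero diagonal; c u v = 0 means "no edge", c u v > 0 is the cost of
   edge {u,v}. *)
Definition network_ok (k m : nat) (C0 : R) (c : 'I_(k + m) -> 'I_(k + m) -> nat) : Prop :=
  (forall u v, c u v = c v u) /\
  (forall u, c u u = 0) /\
  (forall u v, c u v <> 0 -> Rle (INR (c u v)) (Rpower (INR (k + m)) C0)).

Definition cut_cost (n : nat) (c : 'I_n -> 'I_n -> nat) (W : {set 'I_n}) : nat :=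
  \sum_(u in W) \sum_(v in ~: W) c u v.

Definition terms_in (k m : nat) (W : {set 'I_(k + m)}) : {set 'I_k} :=
  [set i : 'I_k | lshift m i \in W].

(* an upper bound on every cut cost, used as neutral element of the min *)
Definition total_cost (n : nat) (c : 'I_n -> 'I_n -> nat) : nat :=
  \sum_u \sum_v c u v.

Definition mincut (k m : nat) (c : 'I_(k + m) -> 'I_(k + m) -> nat) (S : {set 'I_k}) : nat :=
  \big[minn/total_cost c]_(W : {set 'I_(k + m)} |
        (terms_in W == S) || (terms_in W == ~: S)) cut_cost c W.

Definition TC_scheme (k : nat) (C0 : R)
    (P : forall m : nat, ('I_(k + m) -> 'I_(k + m) -> nat) -> seq bool)
    (Qry : {set 'I_k} -> seq bool -> nat) : Prop :=
  forall (m : nat) (c : 'I_(k + m) -> 'I_(k + m) -> nat),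
    network_ok C0 c ->
    forall S : {set 'I_k}, S != set0 -> S != setT ->
      Qry S (P m c) = mincut c S.

(* word size: ceil(log2 n) bits (up_log 2 n = least e with n <= 2^e) *)
Definition word_bits (n : nat) : nat := up_log 2 n.

Definition words (n : nat) (M : seq bool) : nat :=
  (size M + (word_bits n).-1) %/ word_bits n.

(* Main.v *)
Require Import Defs.
From HB Require Import structures.
From mathcomp Require Import all_boot zify.
Set Implicit Arguments. Unset Strict Implicit. Unset Printing Implicit Defensive.

HB.instance Definition _ := SemiGroup.isComLaw.Build nat minn minnA minnC.

Definition netc (k m : nat) (w : 'I_m -> 'I_k -> nat) (u v : 'I_(k + m)) : nat :=
  match split u, split v with
  | inl a, inr g => w g a
  | inr g, inl a => w g a
  | _, _ => 0
  end.

Lemma splitL k m (a : 'I_k) : split (lshift m a) = inl a.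
Proof. exact: (unsplitK (inl a)). Qed.
Lemma splitR k m (g : 'I_m) : split (rshift k g) = inr g.
Proof. exact: (unsplitK (inr g)). Qed.
Lemma inner_L k m (w : 'I_m -> 'I_k -> nat) (W : {set 'I_(k + m)}) a :
  \sum_v (if v \in ~: W then netc w (lshift m a) v else 0) =
  \sum_g (if rshift k g \in W then 0 else w g a).
Proof.
rewrite big_split_ord /=.
rewrite big1 ?add0n; last by move=> b _; rewrite /netc !splitL; case: (_ \in _).
by apply: eq_bigr => g _; rewrite /netc splitL splitR inE; case: (_ \in _).
Qed.
Lemma inner_R k m (w : 'I_m -> 'I_k -> nat) (W : {set 'I_(k + m)}) g :
  \sum_v (if v \in ~: W then netc w (rshift k g) v else 0) =
  \sum_a (if lshift m a \in W then 0 else w g a).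
Proof.
rewrite big_split_ord /=.
rewrite [X in _ + X]big1 ?addn0; last by move=> b _; rewrite /netc !splitR; case: (_ \in _).
by apply: eq_bigr => a _; rewrite /netc splitL splitR inE; case: (_ \in _).
Qed.

Definition In_ k m (w : 'I_m -> 'I_k -> nat) (S : {set 'I_k}) g := \sum_(a in S) w g a.

Lemma cut_formula k m (w : 'I_m -> 'I_k -> nat) (W : {set 'I_(k + m)}) :
  cut_cost (netc w) W =
  \sum_g (if rshift k g \in W then In_ w (~: terms_in W) g else In_ w (terms_in W) g).
Proof.
rewrite /cut_cost.
rewrite (eq_bigr (fun u => \sum_v (if v \in ~: W then netc w u v else 0))); last first.
  by move=> u _; rewrite big_mkcond.
rewrite big_mkcond big_split_ord /=.
rewrite (eq_bigr (fun a => \sum_g (if lshift m a \in W then (if rshift k g \in W then 0 else w g a) else 0))); last first.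
  move=> a _; rewrite inner_L; case: (_ \in W) => //; by rewrite big1.
rewrite [X in _ + X](eq_bigr (fun g => if rshift k g \in W then \sum_a (if lshift m a \in W then 0 else w g a) else 0)); last first.
  by move=> g _; rewrite inner_R.
rewrite exchange_big -big_split /=; apply: eq_bigr => g _.
rewrite /In_ !big_mkcond /=.
case Hg: (rshift k g \in W).
  rewrite big1 ?add0n; last by move=> a _; case: (_ \in W).
  by rewrite [RHS]big_mkcond; apply: eq_bigr => a _; rewrite !inE; case: (_ \in W).
by rewrite addn0 [RHS]big_mkcond; apply: eq_bigr => a _; rewrite !inE; case: (_ \in W).
Qed.

Definition Lsum k m (w : 'I_m -> 'I_k -> nat) (S : {set 'I_k}) :=
  \sum_g minn (In_ w S g) (In_ w (~: S) g).

Lemma LsumC k m (w : 'I_m -> 'I_k -> nat) S : Lsum w (~: S) = Lsum w S.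
Proof. by apply: eq_bigr => g _; rewrite setCK minnC. Qed.

Lemma cut_ge k m (w : 'I_m -> 'I_k -> nat) W : Lsum w (terms_in W) <= cut_cost (netc w) W.
Proof.
rewrite cut_formula; apply: leq_sum => g _.
by case: (_ \in W); rewrite ?geq_minl ?geq_minr.
Qed.

Definition W0 k m (w : 'I_m -> 'I_k -> nat) (S : {set 'I_k}) : {set 'I_(k + m)} :=
  [set u | match split u with inl a => a \in S | inr g => In_ w (~: S) g <= In_ w S g end].

Lemma terms_W0 k m (w : 'I_m -> 'I_k -> nat) S : terms_in (W0 w S) = S.
Proof. by apply/setP => a; rewrite /terms_in /W0 !inE splitL. Qed.

Lemma cut_W0 k m (w : 'I_m -> 'I_k -> nat) S : cut_cost (netc w) (W0 w S) = Lsum w S.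
Proof.
rewrite cut_formula terms_W0; apply: eq_bigr => g _.
rewrite /W0 inE splitR; by case: leqP.
Qed.

Lemma total_ge n (c : 'I_n -> 'I_n -> nat) W : cut_cost c W <= total_cost c.
Proof.
rewrite /cut_cost /total_cost big_mkcond /=; apply: leq_sum => u _.
case: (u \in W) => //.
rewrite big_mkcond /=; apply: leq_sum => v _; by case: (_ \in _).
Qed.

Lemma mincut_eq k m (w : 'I_m -> 'I_k -> nat) S : mincut (netc w) S = Lsum w S.
Proof.
apply/eqP; rewrite eqn_leq; apply/andP; split.
  rewrite /mincut (bigD1 (W0 w S)) /=; last by rewrite terms_W0 eqxx.
  by rewrite cut_W0 geq_minl.
rewrite /mincut; apply: (big_ind (fun v => Lsum w S <= v)).
- by rewrite -(cut_W0 w S) total_ge.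
- by move=> x y Hx Hy; rewrite leq_min Hx Hy.
move=> W /orP [] /eqP HW.
  by rewrite -HW cut_ge.
by rewrite -LsumC -HW cut_ge.
Qed.

Definition wt k m (z : 'I_k) (T : 'I_m -> {set 'I_k}) (M : nat) (g : 'I_m) (a : 'I_k) : nat :=
  if a == z then M * #|T g| - 1 else if a \in T g then M else 0.
Definition wf k m (x : 'I_m -> nat) z T M g (a : 'I_k) := x g * wt z T M g a.

Section Eval.
Variables (k m M : nat) (z : 'I_k) (T : 'I_m -> {set 'I_k}) (x : 'I_m -> nat) (g0 : 'I_m).
Hypothesis Hz : forall g, z \notin T g.
Hypothesis Hsep : forall g, g != g0 -> exists a, (a \in T g) && (a \notin T g0).
Hypothesis Hne : 0 < #|T g0|.
Hypothesis HM : 0 < M.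

Let w := wf x z T M.
Definition O g := \sum_(a in T g0) (if a \in T g then x g else 0).

Lemma In_T0 g : In_ w (T g0) g = M * O g.
Proof.
rewrite /In_ /O big_distrr /=; apply: eq_bigr => a Ha.
rewrite /w /wf /wt; have -> : (a == z) = false.
  by apply/negbTE; apply: contraNneq (Hz g0) => <-.
by case: (a \in T g); rewrite ?muln0 // mulnC.
Qed.

Lemma O_le g : O g <= x g * #|T g|.
Proof.
apply: (@leq_trans (\sum_(a in T g) x g)); last by rewrite sum_nat_const mulnC.
rewrite /O big_mkcond /= [X in _ <= X]big_mkcond; apply: leq_sum => a _.
by case: (a \in T g0); case: (a \in T g).
Qed.

Lemma In_C0 : In_ w (~: T g0) g0 = x g0 * (M * #|T g0| - 1).
Proof.
rewrite /In_ (bigD1 z) /=; last by rewrite inE Hz.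
rewrite big1 ?addn0; first by rewrite /w /wf /wt eqxx.
move=> a /andP [Ha Haz]; rewrite /w /wf /wt; case: (a =P z) => [E|_]; first by rewrite E eqxx in Haz.
by rewrite inE in Ha; rewrite (negbTE Ha) muln0.
Qed.

Lemma In_C g : g != g0 -> x g * (M * #|T g| - 1) + x g * M <= In_ w (~: T g0) g.
Proof.
move=> Hg; have [a /andP [Ha Ha0]] := Hsep Hg.
have Haz : a != z by apply: contraNneq (Hz g) => <-.
rewrite /In_ (bigD1 z) /=; last by rewrite inE Hz.
rewrite (bigD1 a) /=; last by rewrite inE Ha0 Haz.
rewrite addnA; apply: leq_trans (leq_addr _ _); apply: leq_add; rewrite /w /wf /wt ?eqxx //; case: (a =P z) => [E|_]; first by rewrite E eqxx in Haz.
by rewrite Ha.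
Qed.

Lemma Lsum_eval : Lsum w (~: T g0) + x g0 = M * (\sum_(g | g != g0) O g + x g0 * #|T g0|).
Proof.
rewrite /Lsum (bigD1 g0) //= setCK In_C0 In_T0.
have -> : minn (x g0 * (M * #|T g0| - 1)) (M * O g0) = x g0 * (M * #|T g0| - 1).
  have HO : O g0 = x g0 * #|T g0|.
    rewrite /O (eq_bigr (fun _ => x g0)); last by move=> a ->.
    by rewrite sum_nat_const mulnC.
  by apply/minn_idPl; rewrite HO mulnCA leq_mul2l leq_subr orbT.
rewrite (eq_bigr (fun g => M * O g)); last first.
  move=> g Hg; rewrite In_T0; apply/minn_idPr.
  apply: leq_trans (In_C Hg); apply: leq_trans (_ : x g * M * #|T g| <= _).
    by rewrite -mulnA mulnCA leq_mul2l O_le orbT.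
  case Hc: #|T g| => [|c]; first by rewrite muln0.
  rewrite -mulnDr -mulnA leq_mul2l; apply/orP; right.
  move: (M * c.+1) HM => t; lia.
rewrite -big_distrr /= mulnDr [_ + M * _]addnC -addnA; congr (_ + _).
have Hy : 0 < M * #|T g0| by rewrite muln_gt0 HM Hne.
rewrite mulnCA; move: (M * #|T g0|) Hy => y Hy.
case: y Hy => // y _; rewrite subn1 /= mulnS; lia.
Qed.

End Eval.

Lemma decode_ok M t x K : 0 < M -> x < M -> t + x = M * K -> x = (M - t %% M) %% M.
Proof.
move=> HM Hx Ht.
have [x0|xp] : x = 0 \/ 0 < x by lia.
  have : t = M * K by rewrite -Ht x0 addn0.
  by move->; rewrite x0 modnMr subn0 modnn.
have HK : 0 < K by case: K Ht => [|K] //; rewrite muln0; lia.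
have Ht' : t = M * K.-1 + (M - x).
  case: K HK Ht => // K _ Ht; rewrite mulnS in Ht; rewrite /=; lia.
rewrite Ht' mulnC modnMDl (@modn_small (M - x)); last lia.
rewrite modn_small; lia.
Qed.

Definition enc (L : nat) (s : seq bool) := nseq (L - (size s).+1) false ++ true :: s.
Definition dec (t : seq bool) := behead (drop (index true t) t).

Lemma dec_enc L s : dec (enc L s) = s.
Proof.
rewrite /dec /enc; set n := L - _.
have -> : index true (nseq n false ++ true :: s) = n.
  by elim: n => //= n ->.
by rewrite drop_size_cat ?size_nseq.
Qed.

Lemma size_enc L s : size s < L -> size (enc L s) = L.
Proof. by rewrite /enc size_cat size_nseq /=; lia. Qed.

Lemma pigeon (A : finType) (L : nat) (h : A -> seq bool) :
  injective h -> #|A| = 2 ^ L -> exists a, L <= size (h a).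
Proof.
move=> hinj HA.
case: (boolP [exists a, L <= size (h a)]) => [/existsP [a Ha] | H]; first by exists a.
have Hs : forall a, size (h a) < L.
  by move=> a; rewrite ltnNge; apply/negP => Hc; move/negP: H; apply; apply/existsP; exists a.
pose F (a : A) : L.-tuple bool := insubd (nseq_tuple L false) (enc L (h a)).
have HF : forall a, tval (F a) = enc L (h a).
  by move=> a; rewrite /F val_insubd size_enc ?eqxx.
have Finj : injective F.
  move=> a b Hab; apply: hinj; rewrite -(dec_enc L (h a)) -(dec_enc L (h b)) -!HF.
  by rewrite Hab.
have : bijective F by apply: inj_card_bij => //; rewrite card_tuple card_bool HA.
case=> G _ FG.
have := HF (G (nseq_tuple L false)); rewrite FG /= /enc => Heq.
have : true \in nseq L false by rewrite Heq mem_cat inE eqxx orbT.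
by rewrite mem_nseq andbF.
Qed.

From Stdlib Require Import Reals Lra.

Lemma INR_muln a b : INR (a * b) = (INR a * INR b)%R.
Proof. exact: mult_INR. Qed.

Lemma INR_expn a b : INR (expn a b) = (INR a ^ b)%R.
Proof. elim: b => [|b IH]; first by rewrite expn0. by rewrite expnS INR_muln IH. Qed.

Lemma INR_leq a b : a <= b -> (INR a <= INR b)%R.
Proof. by move=> H; apply: le_INR; apply/leP. Qed.

Lemma netc_ok k m (w : 'I_m -> 'I_k -> nat) C0 B :
  (forall g a, w g a <= B) -> (INR B <= Rpower (INR (k + m)) C0)%R -> network_ok C0 (netc w).
Proof.
move=> HB HR; split; [|split].
- by move=> u v; rewrite /netc; case: (fintype.split u) => a; case: (fintype.split v) => b.
- by move=> u; rewrite /netc; case: (fintype.split u) => a.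
move=> u v _; apply: Rle_trans HR; apply: INR_leq.
by rewrite /netc; case: (fintype.split u) => a; case: (fintype.split v) => b.
Qed.

Section Inj.
Variables (k m M : nat) (z : 'I_k) (T : 'I_m -> {set 'I_k}) (C0 : R).
Variables (P : forall m : nat, ('I_(k + m) -> 'I_(k + m) -> nat) -> seq bool)
          (Qry : {set 'I_k} -> seq bool -> nat).
Hypothesis HTC : TC_scheme C0 P Qry.
Hypothesis Hz : forall g, z \notin T g.
Hypothesis Hsep : forall g0 g, g != g0 -> exists a, (a \in T g) && (a \notin T g0).
Hypothesis Hne : forall g0, 0 < #|T g0|.
Hypothesis HM : 0 < M.

Definition cx (x : {ffun 'I_m -> 'I_M}) := netc (wf (fun g => nat_of_ord (x g)) z T M).
Hypothesis Hok : forall x, network_ok C0 (cx x).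

Lemma decode_x (x : {ffun 'I_m -> 'I_M}) g0 :
  nat_of_ord (x g0) = (M - Qry (~: T g0) (@P m (cx x)) %% M) %% M.
Proof.
rewrite (HTC (Hok x)); last first.
- apply/eqP => H; case/card_gt0P: (Hne g0) => a Ha.
  have : a \in ~: T g0 by rewrite H inE.
  by rewrite inE Ha.
- by apply/set0Pn; exists z; rewrite inE Hz.
rewrite /cx mincut_eq.
apply: (@decode_ok M _ _ _ HM (ltn_ord (x g0))).
exact: (@Lsum_eval k m M z T (fun g => nat_of_ord (x g)) g0 Hz (@Hsep g0) (Hne g0) HM).
Qed.

Lemma h_inj : injective (fun x => @P m (cx x)).
Proof.
move=> x y /= Hxy; apply/ffunP => g; apply: val_inj.
by rewrite /= decode_x [RHS]decode_x Hxy.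
Qed.
End Inj.

Definition fv p (g : 'I_#|{: {ffun 'I_p -> bool}}|) : {ffun 'I_p -> bool} := enum_val g.
Definition Tset k p (g : 'I_#|{: {ffun 'I_p -> bool}}|) : {set 'I_k} :=
  [set a : 'I_k | [exists i : 'I_p, nat_of_ord a == (2 * i + fv g i).+1]].

Section T.
Variables (k p : nat).
Hypothesis Hkp : 2 * p < k.

Lemma Tset_z (g : 'I_#|{: {ffun 'I_p -> bool}}|) (a : 'I_k) : nat_of_ord a = 0 -> a \notin Tset k g.
Proof. by move=> Ha; rewrite inE Ha; apply/existsP => -[i]. Qed.

Lemma lt_elt (i : 'I_p) (b : bool) : (2 * i + b).+1 < k.
Proof. have := ltn_ord i; case: b => /=; lia. Qed.

Lemma Tset_ne (g : 'I_#|{: {ffun 'I_p -> bool}}|) : 0 < p -> 0 < #|Tset k g|.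
Proof.
move=> p0; apply/card_gt0P.
exists (Ordinal (lt_elt (Ordinal p0) (fv g (Ordinal p0)))).
by rewrite inE; apply/existsP; exists (Ordinal p0).
Qed.

Lemma Tset_sep (g0 g : 'I_#|{: {ffun 'I_p -> bool}}|) : g != g0 -> exists a, (a \in Tset k g) && (a \notin Tset k g0).
Proof.
move=> Hg.
have Hne : fv g != fv g0 by apply: contra Hg => /eqP /enum_val_inj ->.
case: (boolP [exists i, fv g i != fv g0 i]) => [/existsP [i Hi] | H]; last first.
  case/eqP: Hne; apply/ffunP => i; move/existsPn: H => /(_ i).
  by rewrite negbK => /eqP.
exists (Ordinal (lt_elt i (fv g i))); rewrite !inE /=; apply/andP; split.
  by apply/existsP; exists i.
apply/existsP => -[j /eqP Hj]; move: Hi.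
have Hij : i = j.
  apply: val_inj => /=; move: Hj; case: (fv g i); case: (fv g0 j) => /=; lia.
rewrite -Hij in Hj *; move: Hj; case: (fv g i); case: (fv g0 i) => //=; lia.
Qed.

End T.

Lemma p_facts k : 5 < k -> [/\ 2 * ((k - 1)./2) < k, 2 <= (k - 1)./2 & k <= 4 * ((k - 1)./2)].
Proof.
move=> Hk; have := odd_double_half (k - 1); rewrite -muln2.
move: ((k - 1)./2) => p; case: (odd (k - 1)) => /= H; split; lia.
Qed.

Lemma M_le n : 1 < n -> expn 2 (up_log 2 n) <= 2 * n.
Proof.
move=> Hn; have := up_log_gtn (isT : 1 < 2) Hn.
have : 0 < up_log 2 n by rewrite up_log_gt0 Hn.
case: (up_log 2 n) => // e _ /=; rewrite expnS; lia.
Qed.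

Lemma bound_lemma M n k : M <= 2 * n -> k <= n -> 1 < n -> M * (M * k) <= n * (n * (n * (n * n))).
Proof.
move=> HM2 Hk' Hn.
apply: (@leq_trans (2 * n * (2 * n * n))); first by apply: leq_mul => //; apply: leq_mul.
have H4 : 4 <= n * n by nia.
have -> : 2 * n * (2 * n * n) = 4 * (n * (n * n)) by nia.
have -> : n * (n * (n * (n * n))) = (n * n) * (n * (n * n)) by nia.
by apply: leq_mul.
Qed.

Theorem theorem1p4 :
  exists (gamma C0 : R), Rlt 0 gamma /\ Rle 1 C0 /\
    forall k : nat, 5 < k ->
    forall (P : forall m : nat, ('I_(k + m) -> 'I_(k + m) -> nat) -> seq bool)
           (Qry : {set 'I_k} -> seq bool -> nat),
      TC_scheme C0 P Qry ->
      exists (m : nat) (c : 'I_(k + m) -> 'I_(k + m) -> nat),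
        network_ok C0 c /\
        Rle (Rpower 2 (Rmult gamma (INR k))) (INR (words (k + m) (P m c))).
Proof.
exists (/4)%R, (INR 5); split; first lra.
split; first by simpl; lra.
move=> k Hk P Qry HTC.
have [Hp1 Hp2 Hp3] := p_facts Hk; move: Hp1 Hp2 Hp3.
set p := (k - 1)./2 => Hp1 Hp2 Hp3.
pose m := #|{: {ffun 'I_p -> bool}}|.
have Hm : m = expn 2 p by rewrite /m card_ffun card_bool card_ord.
pose n := k + m.
have Hn : 1 < n by rewrite /n; lia.
pose e := up_log 2 n.
have He : 0 < e by rewrite /e up_log_gt0 Hn.
pose M := expn 2 e.
have HM : 0 < M by rewrite /M expn_gt0.
have HM2 : M <= 2 * n by exact: M_le.
have k0 : 0 < k by lia.
pose z : 'I_k := Ordinal k0.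
pose T := @Tset k p.
have Hz : forall g, z \notin T g by move=> g; exact: Tset_z.
have Hsep : forall g0 g, g != g0 -> exists a, (a \in T g) && (a \notin T g0).
  by move=> g0 g; exact: Tset_sep.
have Hne : forall g0, 0 < #|T g0| by move=> g0; apply: Tset_ne => //; lia.
have Hok : forall x : {ffun 'I_m -> 'I_M}, network_ok (INR 5) (cx z T x).
  move=> x; apply: (@netc_ok _ _ _ _ (M * (M * k))).
    move=> g a; rewrite /wf; apply: leq_mul; first exact: ltnW.
    rewrite /wt; case: (a == z); last case: (a \in T g).
    - apply: leq_trans (leq_subr _ _) _; rewrite leq_mul2l; apply/orP; right.
      by apply: leq_trans (max_card _) _; rewrite card_ord.
    - by rewrite leq_pmulr.
    - by [].
  rewrite Rpower_pow; last by apply: lt_0_INR; apply/ltP; lia.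
  rewrite -INR_expn; apply: INR_leq.
  have Hk' : k <= n by rewrite /n leq_addr.
  rewrite -/n !expnS expn0 muln1.
  exact: bound_lemma.
have := @pigeon _ (e * m) _ (h_inj HTC Hz Hsep Hne HM Hok).
case.
  by rewrite card_ffun !card_ord /M -expnM mulnC.
move=> x Hx.
exists m, (cx z T x); split; first exact: Hok.
apply: (@Rle_trans _ (INR m)).
  rewrite Hm INR_expn; replace (INR 2) with 2%R by (simpl; lra); rewrite -Rpower_pow; last lra.
  apply: Rle_Rpower; first lra.
  have := INR_leq Hp3; rewrite INR_muln /=; lra.
apply: INR_leq.
rewrite /words /word_bits -/n -/e.
apply: leq_trans (leq_div2r _ (leq_trans Hx (leq_addr _ _))).
by rewrite mulKn.
Qed.
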